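(* In $\mathcal H_{n,r}$ we have (1) $g_ig_j=g_jg_i$ for $1\le i,j\le n-1$ with $|i-j|>1$, and (2) $g_ig_{i+1}g_i=g_{i+1}g_ig_{i+1}$ for $1\le i\le n-2$.
   Context: Standing setup: $R$ is an integral domain, $n\ge 2$, $r\ge 1$, and $q,u_1,\ldots,u_r\in R$ with $q$ invertible in $R$ and $\Delta:=\prod_{1\le j<i\le r}(u_i-u_j)$ invertible in $R$. For $1\le c\le r$ let $F_c(X)\in R[X]$ be the unique polynomial of degree $\le r-1$ with $F_c(u_{c'})=\delta_{c,c'}\Delta$ for all $1\le c'\le r$. The modified Ariki–Koike (Shoji) algebra $\mathcal H_{n,r}=\mathcal H_{n,r}(R,q,u_1,\ldots,u_r)$ is the associative $R$-algebra generated by $t_1,\ldots,t_n,T_1,\ldots,T_{n-1}$ subject to: $(T_i-q)(T_i+q^{-1})=0$; $(t_i-u_1)\cdots(t_i-u_r)=0$; $T_iT_{i+1}T_i=T_{i+1}T_iT_{i+1}$; $T_iT_j=T_jT_i$ for $|i-j|\ge2$; $t_it_j=t_jt_i$; $T_jt_k=t_kT_j$ for $k\ne j,j+1$; and for $2\le j\le n$: $T_{j-1}t_j=t_{j-1}T_{j-1}+\Delta^{-2}\sum_{1\le c_1<c_2\le r}(u_{c_2}-u_{c_1})(q-q^{-1})F_{c_1}(t_{j-1})F_{c_2}(t_j)$ and $T_{j-1}t_{j-1}=t_jT_{j-1}-\Delta^{-2}\sum_{1\le c_1<c_2\le r}(u_{c_2}-u_{c_1})(q-q^{-1})F_{c_1}(t_{j-1})F_{c_2}(t_j)$.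 Write $[1,r]=\{1,\ldots,r\}$; for $\mathbf k=(k_1,\ldots,k_n)\in[1,r]^n$ set $b_{\mathbf k}:=\prod_{i=1}^n\prod_{1\le j\le r,\,j\ne k_i}\frac{t_i-u_j}{u_{k_i}-u_j}$. For $1\le i,j\le n$ let $B'_{i,j}:=-(q-q^{-1})\sum_{\mathbf k\in[1,r]^n,\ k_i<k_j}b_{\mathbf k}$, and for $1\le i\le n-1$ let $g_i:=T_i+B'_{i,i+1}$. *)

(* Defs.v *)
From HB Require Import structures.
From mathcomp Require Import all_boot all_order all_algebra.
Set Implicit Arguments. Unset Strict Implicit. Unset Printing Implicit Defensive.
Import Order.TTheory GRing.Theory Num.Theory.
Local Open Scope ring_scope.

(* Indices follow the paper: 1-based natural numbers.
   u : nat -> R is used on 1..r, t : nat -> A on 1..n, T : nat -> A on 1..n-1. *)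

Section ShojiDefs.
Variables (R : comUnitRingType) (A : algType R).

Definition Delta (r : nat) (u : nat -> R) : R :=
  \prod_(1 <= j < r.+1) \prod_(j.+1 <= i < r.+1) (u i - u j).

Definition aeval (p : {poly R}) (a : A) : A :=
  \sum_(i < size p) p`_i *: a ^+ i.

(* the value k_i (in 1..r) of k in [1,r]^n, encoded as k : 'I_n -> 'I_r
   with k_i := (k (i-1)).+1 ; returns 0 outside 1..n (never used there) *)
Definition kval (n r : nat) (k : {ffun 'I_n -> 'I_r}) (i : nat) : nat :=
  oapp (fun x : 'I_n => (k x).+1) 0%N (insub i.-1).

Definition bk (n r : nat) (u : nat -> R) (t : nat -> A) (k : {ffun 'I_n -> 'I_r}) : A :=
  \prod_(i < n) \prod_(1 <= j < r.+1 | j != (k i).+1)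
     ((u (k i).+1 - u j)^-1 *: (t i.+1 - (u j)%:A)).

Definition Bp (n r : nat) (q : R) (u : nat -> R) (t : nat -> A) (i j : nat) : A :=
  - (q - q^-1) *: \sum_(k : {ffun 'I_n -> 'I_r} | (kval k i < kval k j)%N) @bk n r u t k.

Definition gg (n r : nat) (q : R) (u : nat -> R) (t T : nat -> A) (i : nat) : A :=
  T i + Bp n r q u t i i.+1.

Definition corr (r : nat) (q : R) (u : nat -> R) (F : nat -> {poly R}) (t : nat -> A)
    (j : nat) : A :=
  (Delta r u) ^- 2 *:
    \sum_(1 <= c1 < r.+1) \sum_(c1.+1 <= c2 < r.+1)
       ((u c2 - u c1) * (q - q^-1)) *: (aeval (F c1) (t j.-1) * aeval (F c2) (t j)).

End ShojiDefs.

(* Main.v *)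
Require Import Defs.
From HB Require Import structures.
From mathcomp Require Import all_boot all_order all_algebra.
Import Order.TTheory GRing.Theory Num.Theory.
Local Open Scope ring_scope.
From mathcomp Require Import ring zify ssrAC.

Module Aux.
Set Implicit Arguments. Unset Strict Implicit. Unset Printing Implicit Defensive.
Section Generic.
Variables (R : comUnitRingType) (A : algType R).

Lemma commZ (x y : A) (a : R) : GRing.comm x y -> GRing.comm x (a *: y).
Proof. by move=> h; rewrite /GRing.comm -scalerAr -scalerAl h. Qed.

Lemma comm_alg (x : A) (a : R) : GRing.comm x a%:A.
Proof. exact/commZ/commr1. Qed.

Lemma eig_prod (I : eqType) (s : seq I) (E : I -> A) (x : A) j (l : R) :
  j \in s -> (forall i, GRing.comm x (E i)) -> x * E j = l *: E j ->
  x * \prod_(i <- s) E i = l *: \prod_(i <- s) E i.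
Proof.
move=> + hc hj; elim: s => [//|a s IH]; rewrite inE big_cons => /orP [/eqP <-|hs].
  by rewrite mulrA hj scalerAl.
by rewrite mulrA hc -mulrA IH // scalerAr.
Qed.

Lemma prod_eig (I : Type) (s : seq I) (E : I -> A) (y : A) (l : I -> R) :
  (forall i, E i * y = l i *: y) ->
  (\prod_(i <- s) E i) * y = (\prod_(i <- s) l i) *: y.
Proof.
move=> h; elim: s => [|a s IH]; first by rewrite !big_nil mul1r scale1r.
by rewrite !big_cons -mulrA IH -scalerAr h scalerA mulrC.
Qed.

Lemma expr_eig (x y : A) (v : R) m : x * y = v *: y -> x ^+ m * y = v ^+ m *: y.
Proof.
move=> h; elim: m => [|m IH]; first by rewrite !expr0 mul1r scale1r.
by rewrite exprS -mulrA IH -scalerAr h scalerA exprS mulrC.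
Qed.

Lemma aeval_eig (p : {poly R}) (x y : A) (v : R) : x * y = v *: y ->
  aeval p x * y = p.[v] *: y.
Proof.
move=> h; rewrite /aeval mulr_suml horner_coef scaler_suml.
by apply: eq_bigr => i _; rewrite -scalerAl (expr_eig _ h) scalerA.
Qed.

Lemma horner_algE (p : {poly R}) (x : A) : horner_alg x p = aeval p x.
Proof.
rewrite -{1}[p]coefK poly_def rmorph_sum /aeval.
by apply: eq_bigr => i _; rewrite -mul_polyC rmorphM /= horner_algC rmorphXn /= horner_algX mulr_algl.
Qed.

Lemma comm_aeval (p : {poly R}) (x y : A) : GRing.comm x y -> GRing.comm x (aeval p y).
Proof.
by move=> h; apply: commr_sum => i _; apply/commZ/commrX.
Qed.

Lemma cancel_unit (c : R) (X : A) : c \is a GRing.unit -> c *: X = 0 -> X = 0.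
Proof. by move=> hc h; rewrite -[X]scale1r -(mulVr hc) -scalerA h scaler0. Qed.

End Generic.

Section LC.
Variables (R : comPzRingType) (V : lmodType R).

Definition lc (ws : seq V) (cs : seq R) : V := \sum_(i < size ws) cs`_i *: ws`_i.
Definition sadd (m : nat) (cs cs' : seq R) := mkseq (fun i => cs`_i + cs'`_i) m.
Definition sscal (m : nat) (c : R) (cs : seq R) := mkseq (fun i => c * cs`_i) m.
Definition sdel (m j : nat) : seq R := mkseq (fun i => (i == j)%:R) m.

Lemma lcD ws cs cs' : lc ws cs + lc ws cs' = lc ws (sadd (size ws) cs cs').
Proof.
rewrite /lc -big_split /=; apply: eq_bigr => i _.
by rewrite nth_mkseq // scalerDl.
Qed.

Lemma lcZ ws c cs : c *: lc ws cs = lc ws (sscal (size ws) c cs).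
Proof.
rewrite /lc scaler_sumr; apply: eq_bigr => i _.
by rewrite nth_mkseq // scalerA.
Qed.

Lemma lcN ws cs : - lc ws cs = lc ws (sscal (size ws) (-1) cs).
Proof. by rewrite -lcZ scaleN1r. Qed.

Lemma lcW ws j : (j < size ws)%N -> ws`_j = lc ws (sdel (size ws) j).
Proof.
move=> hj; rewrite /lc (bigD1 (Ordinal hj)) //= nth_mkseq // eqxx scale1r.
rewrite big1 ?addr0 // => i /eqP hi; rewrite nth_mkseq //.
by rewrite (_ : (i == j :> nat) = false) ?scale0r //; apply/eqP => e; apply: hi; apply: val_inj.
Qed.

Lemma lc_eq ws cs cs' : (forall i, (i < size ws)%N -> cs`_i = cs'`_i) -> lc ws cs = lc ws cs'.
Proof. by move=> h; apply: eq_bigr => i _; rewrite h. Qed.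

End LC.

Ltac lc_fold := repeat (first [rewrite lcZ | rewrite lcN | rewrite lcD]).
Ltac lc_close := apply: lc_eq; do 9?(case; [move=> _ /=; ring|]); move=> ? //.

Section LCtest.
Variables (R : comPzRingType) (V : lmodType R).
Lemma quad_solve (Z G x : V) (a c d : R) :
  Z + a *: G + c *: (G + c *: x) = d *: (G + c *: x) + x ->
  Z = (d - a - c) *: G + (1 - c ^+ 2 + d * c) *: x.
Proof.
move=> h; apply: (addIr (a *: G + c *: (G + c *: x))); rewrite addrA h.
pose ws := [:: Z; G; x].
rewrite -[G]/(ws`_1) -[x]/(ws`_2) !(lcW (ws:=ws)) //.
lc_fold.
lc_close.
Qed.
End LCtest.

Section Main.
Variables (R : idomainType) (A : algType R) (n r : nat)
  (q : R) (u : nat -> R) (F : nat -> {poly R}) (t T : nat -> A).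
Hypothesis Hn : (2 <= n)%N.
Hypothesis Hr : (1 <= r)%N.
Hypothesis Hq : q \is a GRing.unit.
Hypothesis HD : Delta r u \is a GRing.unit.
Hypothesis Ht0 : forall i, (1 <= i <= n)%N -> \prod_(1 <= c < r.+1) (t i - (u c)%:A) = 0.
Hypothesis Htt : forall i j, (1 <= i <= n)%N -> (1 <= j <= n)%N -> t i * t j = t j * t i.

Lemma unit_diff a b : (1 <= a <= r)%N -> (1 <= b <= r)%N -> a != b ->
  (u a - u b) \is a GRing.unit.
Proof.
wlog ba : a b / (b < a)%N.
  move=> W ha hb ab; case: (ltngtP a b) => h.
  - by rewrite -opprB unitrN W // eq_sym.
  - exact: W.
  - by rewrite h eqxx in ab.
move=> ha hb _; move: HD; rewrite /Delta => /unitr_prodP /(_ b).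
rewrite mem_index_iota ltnS; move: hb => /andP [-> ->] /(_ isT isT).
move/unitr_prodP/(_ a); rewrite mem_index_iota ltnS ba; move: ha => /andP [_ ->].
by move/(_ isT isT).
Qed.

Lemma diff_neq0 a b : (1 <= a <= r)%N -> (1 <= b <= r)%N -> a != b -> u a != u b.
Proof.
move=> ha hb ab; rewrite -subr_eq0; apply/negP => /eqP h.
by move: (unit_diff ha hb ab); rewrite h unitr0.
Qed.

Definition Ef (x : A) (c : nat) : A :=
  \prod_(1 <= j < r.+1 | j != c) ((u c - u j)^-1 *: (x - (u j)%:A)).
Definition LP (c : nat) : {poly R} :=
  \prod_(1 <= j < r.+1 | j != c) ((u c - u j)^-1 *: ('X - (u j)%:P)).

Lemma EfE x c : Ef x c = horner_alg x (LP c).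
Proof.
rewrite /Ef /LP rmorph_prod; apply: eq_bigr => j _.
by rewrite -mul_polyC rmorphM /= horner_algC rmorphB /= horner_algX horner_algC mulr_algl.
Qed.

Lemma LP_val c d : (1 <= c <= r)%N -> (1 <= d <= r)%N -> (LP c).[u d] = (c == d)%:R.
Proof.
move=> hc hd; rewrite /LP horner_prod.
case: eqP => [<-|/eqP cd].
  rewrite big_nat_cond big1 // => j /andP [/andP [j1 jr] jc].
  by rewrite hornerZ hornerXsubC mulVr // unit_diff // 1?eq_sym // j1 -ltnS.
rewrite big_mkcond (bigD1_seq d) ?mem_index_iota ?iota_uniq //=.
by rewrite eq_sym cd hornerZ hornerXsubC subrr mulr0 mul0r.
Qed.


Lemma sum_deltaG (m N a : nat) (f : nat -> R) :
  \sum_(m <= c < N) (c == a)%:R * f c = (m <= a < N)%:R * f a.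
Proof.
rewrite (eq_bigr (fun c => if c == a then f c else 0)); last first.
  by move=> c _; case: eqP; rewrite ?mul1r ?mul0r.
by rewrite -big_mkcond big_nat1_eq; case: ifP; rewrite ?mul1r ?mul0r.
Qed.

Lemma sum_delta (a : nat) (f : nat -> R) : (1 <= a <= r)%N ->
  \sum_(1 <= c < r.+1) (c == a)%:R * f c = f a.
Proof. by move=> ha; rewrite sum_deltaG ltnS ha mul1r. Qed.

Lemma LP_eig (x : A) c : \prod_(1 <= j < r.+1) (x - (u j)%:A) = 0 -> (1 <= c <= r)%N ->
  x * Ef x c = u c *: Ef x c.
Proof.
move=> h0 hc.
have hp : ('X - (u c)%:P) * LP c = (\prod_(1 <= j < r.+1 | j != c) (u c - u j)^-1) *:
    \prod_(1 <= j < r.+1) ('X - (u j)%:P).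
  rewrite /LP scaler_prod -scalerAr; congr (_ *: _).
  by rewrite [RHS](bigD1_seq c) ?mem_index_iota ?iota_uniq // ltnS.
have := congr1 (horner_alg x) hp.
rewrite rmorphM /= rmorphB /= horner_algX horner_algC -EfE -mul_polyC rmorphM /= horner_algC mulr_algl rmorph_prod /=.
rewrite (eq_bigr (fun j => x - (u j)%:A)); last first.
  by move=> j _; rewrite rmorphB /= horner_algX horner_algC.
by rewrite h0 scaler0 mulrBl mulr_algl => /eqP; rewrite subr_eq0 => /eqP.
Qed.

Lemma size_LP c : (1 <= c <= r)%N -> (size (LP c) <= r)%N.
Proof.
move=> hc; rewrite /LP scaler_prod.
apply: leq_trans (size_scale_leq _ _) _.
rewrite -big_filter size_prod_XsubC size_filter.
have := count_predC (pred1 c) (index_iota 1 r.+1).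
rewrite size_iota subSS subn0 count_uniq_mem ?iota_uniq // mem_index_iota ltnS hc.
set s := index_iota 1 r.+1; have -> : count (fun i => i != c) s = count (predC (pred1 c)) s by []; move: (count _ s) => m; lia.
Qed.

Lemma sum_LP : \sum_(1 <= c < r.+1) LP c = 1.
Proof.
apply/eqP; rewrite -subr_eq0; apply/eqP/eqP/negPn/negP => hQ.
have := max_poly_roots hQ (rs := [seq u j | j <- index_iota 1 r.+1]).
rewrite size_map size_iota subSS subn0.
have -> : all (root (\sum_(1 <= c < r.+1) LP c - 1)) [seq u j | j <- index_iota 1 r.+1].
  apply/allP => z /mapP [d]; rewrite mem_index_iota ltnS => hd ->.
  rewrite /root hornerD hornerN hornerC horner_sum.
  rewrite (eq_big_nat _ _ (F2 := fun c => (c == d)%:R * 1)); last first.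
    by move=> c; rewrite ltnS => hc; rewrite LP_val // mulr1.
  by rewrite sum_delta // subrr.
have -> : uniq [seq u j | j <- index_iota 1 r.+1].
  rewrite map_inj_in_uniq ?iota_uniq // => a b.
  rewrite !mem_index_iota !ltnS => ha hb /eqP; apply: contraTeq => ab.
  exact: diff_neq0.
move=> /(_ isT isT); apply/negP; rewrite -leqNgt.
apply: leq_trans (size_add _ _) _; rewrite geq_max size_polyN size_poly1 Hr andbT.
apply: leq_trans (size_sum _ _ _) _; rewrite big_seq_cond.
elim/big_ind: _ => //; first by move=> x y hx hy; rewrite geq_max hx hy.
by move=> c /andP [+ _]; rewrite mem_index_iota ltnS => hc; apply: size_LP.
Qed.


Hypothesis HFv : forall c c', (1 <= c <= r)%N -> (1 <= c' <= r)%N ->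
      (F c).[u c'] = (if c == c' then Delta r u else 0).

Notation b := (@bk _ _ n r u t).
Notation D := (q - q^-1).

Lemma bkE k : b k = \prod_(i < n) Ef (t i.+1) (k i).+1.
Proof. by []. Qed.

Lemma kvalS (k : {ffun 'I_n -> 'I_r}) (x : 'I_n) : kval k x.+1 = (k x).+1.
Proof. by rewrite /kval /= valK. Qed.

Lemma nat_ord m : (1 <= m <= n)%N -> {x : 'I_n | m = x.+1}.
Proof.
case: m => [//|m] /= hm; have hm' : (m < n)%N by [].
by exists (Ordinal hm').
Qed.

Lemma kval_range (k : {ffun 'I_n -> 'I_r}) m : (1 <= m <= n)%N -> (1 <= kval k m <= r)%N.
Proof. by move=> /nat_ord [x ->]; rewrite kvalS /=. Qed.

Lemma comm_tE m x c : (1 <= m <= n)%N -> (1 <= x <= n)%N -> GRing.comm (t m) (Ef (t x) c).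
Proof. by move=> hm hx; rewrite EfE horner_algE; apply: comm_aeval; exact: Htt. Qed.

Lemma comm_tb m k : (1 <= m <= n)%N -> GRing.comm (t m) (b k).
Proof. by move=> hm; rewrite bkE; apply: commr_prod => i _; apply: comm_tE => //=; rewrite ltn_ord. Qed.

Lemma t_b m k : (1 <= m <= n)%N -> t m * b k = u (kval k m) *: b k.
Proof.
move=> hm; case: (nat_ord hm) => x ex; rewrite bkE; apply: (eig_prod (j := x)).
- exact: mem_index_enum.
- by move=> i; apply: comm_tE => //=; rewrite ltn_ord.
rewrite ex kvalS; apply: LP_eig; first by apply: Ht0; rewrite -ex.
by rewrite /= ltn_ord.
Qed.

Lemma b_t m k : (1 <= m <= n)%N -> b k * t m = u (kval k m) *: b k.
Proof. by move=> hm; rewrite -(comm_tb k hm) t_b. Qed.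

Lemma b_orth l k : b l * b k = (l == k)%:R *: b k.
Proof.
have hE : forall i : 'I_n, Ef (t i.+1) (l i).+1 * b k = ((l i).+1 == (k i).+1)%:R *: b k.
  move=> i; rewrite EfE horner_algE (aeval_eig _ (t_b _ _)); last by rewrite /= ltn_ord.
  by rewrite kvalS LP_val //= ltn_ord.
rewrite bkE (prod_eig _ hE).
case: eqP => [->|/eqP lk].
  by rewrite big1 // => i _; rewrite eqxx.
have [x hx] : exists x, l x != k x.
  by apply/existsP; move: lk; apply: contraNT; rewrite negb_exists => /forallP h; apply/eqP/ffunP => x; apply/eqP; move: (h x); rewrite negbK.
have hx' : ((l x : nat) == k x) = false by apply/negbTE.
by rewrite (bigD1 x) //= eqSS hx' mul0r.
Qed.

Lemma b_sum : \sum_k b k = 1.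
Proof.
rewrite (eq_bigr (fun k : {ffun 'I_n -> 'I_r} => \prod_(i < n) (fun i c => Ef (t i.+1) (c : 'I_r).+1) i (k i))) //.
rewrite -(bigA_distr_bigA (fun (i : 'I_n) (c : 'I_r) => Ef (t i.+1) c.+1)) /=.
apply: big1 => i _.
have <- : \sum_(1 <= c < r.+1) Ef (t i.+1) c = \sum_(j < r) Ef (t i.+1) j.+1 by rewrite big_add1 /= big_mkord.
rewrite (eq_bigr (fun c => horner_alg (t i.+1) (LP c))); last by move=> c _; rewrite EfE.
by rewrite -rmorph_sum sum_LP rmorph1.
Qed.


Definition eps m (l : {ffun 'I_n -> 'I_r}) : R := - D * (kval l m < kval l m.+1)%:R.

Lemma Bp_b m l : Bp n r q u t m m.+1 * b l = eps m l *: b l.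
Proof.
rewrite /Bp -scalerAl mulr_suml (eq_bigr (fun k => (k == l)%:R *: b l)); last first.
  by move=> k _; rewrite b_orth.
rewrite -scaler_suml scalerA /eps; congr ((_ * _) *: _).
rewrite (eq_bigr (fun k => if k == l then 1 else 0)); last by move=> k _; case: eqP.
rewrite -big_mkcondr; case hP : (kval l m < kval l m.+1)%N.
  rewrite (big_pred1 l) // => k /=; case: eqP => [->|]; rewrite ?hP ?andbF //.
by rewrite big_pred0 // => k /=; case: eqP => [->|]; rewrite ?hP ?andbF.
Qed.

Lemma corr_b i k : (1 <= i)%N -> (i < n)%N ->
  corr r q u F t i.+1 * b k =
  ((kval k i < kval k i.+1)%:R * ((u (kval k i.+1) - u (kval k i)) * D)) *: b k.
Proof.
move=> i1 iN.
have hi : (1 <= i <= n)%N by rewrite i1 ltnW.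
have hi1 : (1 <= i.+1 <= n)%N by [].
set a := kval k i; set bb := kval k i.+1.
have ha : (1 <= a <= r)%N by apply: kval_range.
have hb : (1 <= bb <= r)%N by apply: kval_range.
set De := Delta r u.
rewrite /corr -scalerAl mulr_suml.
rewrite (eq_big_nat _ _ (F2 := fun c1 => ((c1 == a)%:R * ((c1.+1 <= bb < r.+1)%:R *
     (De * De * ((u bb - u c1) * D)))) *: b k)); last first.
  move=> c1; rewrite ltnS => hc1.
  rewrite mulr_suml (eq_big_nat _ _ (F2 := fun c2 => ((c1 == a)%:R * ((c2 == bb)%:R *
     (De * De * ((u c2 - u c1) * D)))) *: b k)); last first.
    move=> c2 /andP [h1 h2]; rewrite ltnS in h2.
    have hc2 : (1 <= c2 <= r)%N by rewrite h2 andbT; apply: leq_trans h1; case/andP: hc1.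
    rewrite -scalerAl -[_ * _ * b k]mulrA (aeval_eig _ (t_b k hi1)) -scalerAr /=.
    rewrite (aeval_eig _ (t_b k hi)) !scalerA !HFv // -/a -/bb -/De.
    by congr (_ *: _); case: (c1 == a); case: (c2 == bb); rewrite /=; ring.
  by rewrite -scaler_suml -mulr_sumr sum_deltaG.
rewrite -scaler_suml sum_deltaG scalerA; congr (_ *: _).
rewrite -/De ltnS ha /= ltnS; case/andP: hb => _ ->; rewrite andbT.
have hDD : De^-2 * De^+2 = 1 by rewrite mulVr // unitrX.
transitivity ((De^-2 * De^+2) * ((a < bb)%:R * ((u bb - u a) * D))); last by rewrite hDD mul1r.
by ring.
Qed.

Definition tn (i x : nat) : nat := if x == i.-1 then i else if x == i then i.-1 else x.
Definition sw i (k : {ffun 'I_n -> 'I_r}) : {ffun 'I_n -> 'I_r} :=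
  [ffun x : 'I_n => k (insubd x (tn i x))].
Definition swn i m := if m == i then i.+1 else if m == i.+1 then i else m.

Lemma kval_sw i k m : (1 <= i < n)%N -> (1 <= m <= n)%N -> kval (sw i k) m = kval k (swn i m).
Proof.
move=> hi /nat_ord [x ->]; rewrite kvalS ffunE.
have ht : (tn i x < n)%N.
  rewrite /tn; case: eqP => _; first by case/andP: hi.
  case: eqP => _; last exact: ltn_ord.
  by case/andP: hi => _ h; apply: leq_ltn_trans (leq_pred i) h.
have -> : swn i x.+1 = (insubd x (tn i x) : nat).+1.
  rewrite val_insubd ht /swn /tn; case/andP: hi => i1 _.
  case: (nat_of_ord x =P i.-1) => [->|h1]; first by rewrite prednK // eqxx.
  case: (nat_of_ord x =P i) => [->|h2]; first by rewrite (gtn_eqF (ltnSn i)) eqxx prednK.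
  case: eqP => [e|_]; first by case: h1; rewrite -e.
  by case: eqP => [[e]|].
by rewrite kvalS.
Qed.

Lemma ord_of_kval (l k : {ffun 'I_n -> 'I_r}) :
  (forall m, (1 <= m <= n)%N -> kval l m = kval k m) -> l = k.
Proof.
move=> h; apply/ffunP => x; apply/val_inj; have := h x.+1.
by rewrite !kvalS => /(_ (ltn_ord x)) [] .
Qed.

Lemma sw_id i k : (1 <= i < n)%N -> kval k i = kval k i.+1 -> sw i k = k.
Proof.
move=> hi e; apply: ord_of_kval => m hm; rewrite kval_sw // /swn.
by case: eqP => [->|_]; [|case: eqP => [->|]].
Qed.

Lemma sw_mismatch i k l : (1 <= i < n)%N -> l != sw i k ->
  exists2 m, (1 <= m <= n)%N & kval l m != kval k (swn i m).
Proof.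
move=> hi ne.
case: (boolP [exists x : 'I_n, kval l x.+1 != kval k (swn i x.+1)]) => [/existsP [x hx]|].
  by exists x.+1 => //; rewrite /= ltn_ord.
rewrite negb_exists => /forallP h; case/eqP: ne; apply: ord_of_kval => m hm.
rewrite kval_sw //; case: (nat_ord hm) => x ex; subst m.
by move: (h x); rewrite negbK => /eqP.
Qed.


Hypothesis HTt : forall j k, (1 <= j <= n.-1)%N -> (1 <= k <= n)%N -> k != j -> k != j.+1 ->
      T j * t k = t k * T j.
Hypothesis Hc1 : forall j, (2 <= j <= n)%N ->
      T j.-1 * t j = t j.-1 * T j.-1 + corr r q u F t j.
Hypothesis Hc2 : forall j, (2 <= j <= n)%N ->
      T j.-1 * t j.-1 = t j * T j.-1 - corr r q u F t j.

Notation g i := (gg n r q u t T i).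
Definition gam i (k : {ffun 'I_n -> 'I_r}) : R :=
  (kval k i < kval k i.+1)%:R * ((u (kval k i.+1) - u (kval k i)) * D).

Lemma R1 i l k : (1 <= i)%N -> (i < n)%N ->
  u (kval k i.+1) *: (b l * T i * b k) =
  u (kval l i) *: (b l * T i * b k) + ((l == k)%:R * gam i k) *: b k.
Proof.
move=> i1 iN.
have hi : (1 <= i <= n)%N by rewrite i1 ltnW.
have hi1 : (1 <= i.+1 <= n)%N by [].
have h2 : (2 <= i.+1 <= n)%N by apply/andP.
have := congr1 (fun z => b l * z * b k) (Hc1 (j := i.+1) h2) => /= e.
have e1 : b l * (T i * t i.+1) * b k = u (kval k i.+1) *: (b l * T i * b k).
  by rewrite !mulrA -[_ * t i.+1 * b k]mulrA t_b // -scalerAr.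
rewrite -e1 e mulrDr mulrDl !mulrA b_t // -!scalerAl; congr (_ + _).
by rewrite -mulrA corr_b // -scalerAr b_orth scalerA; congr (_ *: _); rewrite /gam; ring.
Qed.

Lemma R2 i l k : (1 <= i)%N -> (i < n)%N ->
  u (kval k i) *: (b l * T i * b k) =
  u (kval l i.+1) *: (b l * T i * b k) - ((l == k)%:R * gam i k) *: b k.
Proof.
move=> i1 iN.
have hi : (1 <= i <= n)%N by rewrite i1 ltnW.
have hi1 : (1 <= i.+1 <= n)%N by [].
have h2 : (2 <= i.+1 <= n)%N by apply/andP.
have := congr1 (fun z => b l * z * b k) (Hc2 (j := i.+1) h2) => /= e.
have e1 : b l * (T i * t i) * b k = u (kval k i) *: (b l * T i * b k).
  by rewrite !mulrA -[_ * t i * b k]mulrA t_b // -scalerAr.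
rewrite -e1 e mulrBr mulrBl !mulrA b_t // -!scalerAl; congr (_ - _).
by rewrite -[b l * _ * b k]mulrA corr_b // -scalerAr b_orth scalerA; congr (_ *: _); rewrite /gam; ring.
Qed.

Lemma R3 i m l k : (1 <= i)%N -> (i < n)%N -> (1 <= m <= n)%N -> m != i -> m != i.+1 ->
  u (kval k m) *: (b l * T i * b k) = u (kval l m) *: (b l * T i * b k).
Proof.
move=> i1 iN hm mi mi1.
have hTi : (1 <= i <= n.-1)%N by rewrite i1 -ltnS prednK // (leq_trans _ Hn).
rewrite scalerAr -t_b // !scalerAl -b_t // -!mulrA; congr (_ * _).
by rewrite !mulrA HTt.
Qed.

Lemma KL0 i l k : (1 <= i)%N -> (i < n)%N -> l != sw i k -> b l * g i * b k = 0.
Proof.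
move=> i1 iN ne.
have hi : (1 <= i < n)%N by rewrite i1.
have hi' : (1 <= i <= n)%N by rewrite i1 ltnW.
have hi1 : (1 <= i.+1 <= n)%N by [].
rewrite /gg mulrDr mulrDl -[X in _ + X]mulrA Bp_b -scalerAr b_orth scalerA.
set X := b l * T i * b k.
case: (l =P k) => [elk | /eqP nlk].
  subst l.
  have hab : kval k i != kval k i.+1.
    by apply/eqP => e; move: ne; rewrite sw_id // eqxx.
  have := R1 k k i1 iN; rewrite -/X eqxx mul1r /gam => /eqP.
  move=> /eqP e0.
  have e : (u (kval k i.+1) - u (kval k i)) *: X =
     ((kval k i < kval k i.+1)%:R * ((u (kval k i.+1) - u (kval k i)) * D)) *: b k.
    by rewrite scalerBl e0 addrAC subrr add0r.
  have hu := unit_diff (kval_range k hi1) (kval_range k hi') (contra_neq esym hab).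
  have eX : X = ((kval k i < kval k i.+1)%:R * D) *: b k.
    apply/eqP; rewrite -subr_eq0; apply/eqP; apply: (cancel_unit hu).
    by rewrite scalerBr e scalerA; apply/eqP; rewrite subr_eq0; apply/eqP; congr (_ *: _); ring.
  rewrite eX -scalerDl /eps /= mulr1.
  by rewrite (_ : _ + _ = 0) ?scale0r //; ring.
rewrite /= mulr0 scale0r addr0.
have [m hm hne] := sw_mismatch hi ne.
move: hne; rewrite /swn; case: (m =P i) => [em|/eqP mi].
  subst m.
  move=> hne; have := R1 l k i1 iN; rewrite -/X (negbTE nlk) mul0r scale0r addr0 => /eqP.
  rewrite -subr_eq0 -scalerBl => /eqP; apply: cancel_unit.
  by apply: unit_diff; rewrite ?kval_range // eq_sym.
case: (m =P i.+1) => [em|/eqP mi1].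
  subst m; move=> hne; have := R2 l k i1 iN; rewrite -/X (negbTE nlk) mul0r scale0r subr0 => /eqP.
  rewrite -subr_eq0 -scalerBl => /eqP; apply: cancel_unit.
  by apply: unit_diff; rewrite ?kval_range // eq_sym.
move=> hne; have := R3 l k i1 iN hm mi mi1; rewrite -/X => /eqP.
rewrite -subr_eq0 -scalerBl => /eqP; apply: cancel_unit.
by apply: unit_diff; rewrite ?kval_range // eq_sym.
Qed.

Lemma KL i k : (1 <= i)%N -> (i < n)%N -> g i * b k = b (sw i k) * (g i * b k).
Proof.
move=> i1 iN.
rewrite -{1}[g i * b k]mul1r -b_sum mulr_suml (bigD1 (sw i k)) //= big1 ?addr0 ?mulrA //.
by move=> l hl; rewrite mulrA KL0.
Qed.


Hypothesis HT2 : forall i, (1 <= i <= n.-1)%N -> (T i - q%:A) * (T i + q^-1%:A) = 0.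

Definition Pure l (x : A) := b l * x = x.

Lemma pure_b l : Pure l (b l).
Proof. by rewrite /Pure b_orth eqxx scale1r. Qed.

Lemma pure_g i l x : (1 <= i)%N -> (i < n)%N -> Pure l x -> Pure (sw i l) (g i * x).
Proof.
move=> i1 iN hx; rewrite /Pure -hx !mulrA; congr (_ * x).
by rewrite [RHS](KL l i1 iN) mulrA.
Qed.

Lemma Bp_pure m l x : Pure l x -> Bp n r q u t m m.+1 * x = eps m l *: x.
Proof. by move=> hx; rewrite -hx mulrA Bp_b -scalerAl. Qed.

Lemma T_pure i l x : Pure l x -> T i * x = g i * x + (- eps i l) *: x.
Proof. by move=> hx; rewrite /gg mulrDl (Bp_pure _ hx) scaleNr addrK. Qed.

Lemma quadT i : (1 <= i)%N -> (i < n)%N -> T i * T i = D *: T i + 1.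
Proof.
move=> i1 iN; have hi : (1 <= i <= n.-1)%N by rewrite i1 -ltnS prednK // (leq_trans _ Hn).
have := HT2 hi; rewrite mulrBl !mulrDr mulr_algr !mulr_algl scalerA mulrV // scale1r.
move=> /eqP; rewrite subr_eq0 => /eqP e.
apply: (addIr (q^-1 *: T i)); rewrite e scalerBl.
by rewrite addrAC subrK.
Qed.

Lemma gg2 i l x : (1 <= i)%N -> (i < n)%N -> Pure l x ->
  g i * (g i * x) = (D + eps i l + eps i (sw i l)) *: (g i * x) +
                    (1 - eps i l ^+ 2 - D * eps i l) *: x.
Proof.
move=> i1 iN hx.
have hG := pure_g i1 iN hx.
have e1 := T_pure i hx.
have e2 := T_pure i hG.
have : T i * (T i * x) = D *: (T i * x) + x by rewrite mulrA quadT // mulrDl mul1r -scalerAl.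
rewrite e1 mulrDr e2 -scalerAr e1 => /quad_solve ->.
by congr (_ *: _ + _ *: _); ring.
Qed.


Lemma eps_far i j k : (1 <= i)%N -> (i < n)%N -> (1 <= j)%N -> (j < n)%N ->
  ((i.+1 < j) || (j.+1 < i))%N -> eps i (sw j k) = eps i k.
Proof.
move=> i1 iN j1 jN far.
have hj : (1 <= j < n)%N by rewrite j1 jN.
have hi : (1 <= i <= n)%N by rewrite i1 ltnW.
have hi1 : (1 <= i.+1 <= n)%N by rewrite iN.
rewrite /eps (kval_sw _ hj hi) (kval_sw _ hj hi1) /swn.
have -> : (i == j) = false by apply/eqP; move: far; lia.
have -> : (i == j.+1) = false by apply/eqP; move: far; lia.
have -> : (i.+1 == j) = false by apply/eqP; move: far; lia.
by have -> : (i.+1 == j.+1) = false by apply/eqP; move: far; lia.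
Qed.

Lemma part1 i j : (1 <= i)%N -> (i < n)%N -> (1 <= j)%N -> (j < n)%N ->
  ((i.+1 < j) || (j.+1 < i))%N -> T i * T j = T j * T i -> g i * g j = g j * g i.
Proof.
move=> i1 iN j1 jN far HTij.
rewrite -[g i * g j]mulr1 -[g j * g i]mulr1 -b_sum !mulr_sumr; apply: eq_bigr => k _.
have H := congr1 (fun z => z * b k) HTij; rewrite /= -!mulrA in H.
have hb := pure_b k.
have hGi := pure_g i1 iN hb; have hGj := pure_g j1 jN hb.
rewrite (T_pure i hb) (T_pure j hb) !mulrDr -!scalerAr (T_pure i hGj) (T_pure j hGi) in H.
rewrite (T_pure i hb) (T_pure j hb) (eps_far k i1 iN j1 jN far) in H.
rewrite (eps_far k j1 jN i1 iN) in H; last by rewrite orbC.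
rewrite -!mulrA.
move/eqP: H; rewrite -subr_eq0 => /eqP H; apply/eqP; rewrite -subr_eq0 -H; apply/eqP.
move: (eps i k) (eps j k) => e1 e2.
move: (g i * (g j * b k)) (g j * (g i * b k)) => X Y.
move: (g i * b k) (g j * b k) => Gi Gj.
move: (b k) => B.
move: (q - q^-1) => DD.
pose ws := [:: X; Y; Gi; Gj; B].
rewrite -[X]/(ws`_0) -[Y]/(ws`_1) -[Gi]/(ws`_2) -[Gj]/(ws`_3) -[B]/(ws`_4) !(lcW (ws:=ws)) //.
lc_fold.
lc_close.
Qed.


Lemma part2 i : (1 <= i)%N -> (i.+1 < n)%N ->
  T i * T i.+1 * T i = T i.+1 * T i * T i.+1 ->
  g i * g i.+1 * g i = g i.+1 * g i * g i.+1.
Proof.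
move=> i1 iN HT.
have iN' : (i < n)%N by apply: ltnW.
have j1 : (1 <= i.+1)%N by [].
have hi : (1 <= i < n)%N by rewrite i1 iN'.
have hj : (1 <= i.+1 < n)%N by rewrite iN.
have p0 : (1 <= i <= n)%N by rewrite i1 ltnW.
have p1 : (1 <= i.+1 <= n)%N by rewrite ltnW.
have p2 : (1 <= i.+2 <= n)%N by [].
have Ki0 l : kval (sw i l) i = kval l i.+1 by rewrite kval_sw // /swn eqxx.
have Ki1 l : kval (sw i l) i.+1 = kval l i.
  by rewrite kval_sw // /swn (gtn_eqF (ltnSn i)) eqxx.
have Ki2 l : kval (sw i l) i.+2 = kval l i.+2.
  rewrite kval_sw // /swn; have -> : (i.+2 == i) = false by apply/eqP; lia.
  by have -> : (i.+2 == i.+1) = false by apply/eqP; lia.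
have Kj0 l : kval (sw i.+1 l) i = kval l i.
  rewrite kval_sw // /swn; have -> : (i == i.+1) = false by apply/eqP; lia.
  by have -> : (i == i.+2) = false by apply/eqP; lia.
have Kj1 l : kval (sw i.+1 l) i.+1 = kval l i.+2 by rewrite kval_sw // /swn eqxx.
have Kj2 l : kval (sw i.+1 l) i.+2 = kval l i.+1.
  by rewrite kval_sw // /swn (gtn_eqF (ltnSn i.+1)) eqxx.
rewrite -[g i * g i.+1 * g i]mulr1 -[g i.+1 * g i * g i.+1]mulr1 -b_sum !mulr_sumr; apply: eq_bigr => k _.
have H := congr1 (fun z => z * b k) HT; rewrite /= -!mulrA in H.
have hb := pure_b k.
have hGi := pure_g i1 iN' hb; have hGj := pure_g j1 iN hb.
have hAji := pure_g j1 iN hGi; have hAij := pure_g i1 iN' hGj.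
have Tib := T_pure i hb; have Tjb := T_pure i.+1 hb.
have TjGi := T_pure i.+1 hGi; have TiGj := T_pure i hGj.
have TiGi := T_pure i hGi; have TjGj := T_pure i.+1 hGj.
have TiAji := T_pure i hAji; have TjAij := T_pure i.+1 hAij.
have Qi := gg2 i1 iN' hb; have Qj := gg2 j1 iN hb.
rewrite Tib Tjb in H.
repeat progress (rewrite ?mulrDr -?scalerAr ?Tib ?Tjb ?TjGi ?TiGj ?TiGi ?TjGj ?TiAji ?TjAij ?Qi ?Qj in H).
rewrite /eps in H.
repeat progress (rewrite ?Ki0 ?Ki1 ?Ki2 ?Kj0 ?Kj1 ?Kj2 in H).
rewrite -!mulrA.
move/eqP: H; rewrite -subr_eq0 => /eqP H; apply/eqP; rewrite -subr_eq0 -H; apply/eqP.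
move: (kval k i) (kval k i.+1) (kval k i.+2) => a bb c.
move: (g i * (g i.+1 * (g i * b k))) (g i.+1 * (g i * (g i.+1 * b k))) => W V.
move: (g i.+1 * (g i * b k)) (g i * (g i.+1 * b k)) => Aji Aij.
move: (g i * b k) (g i.+1 * b k) => Gi Gj.
move: (b k) => B.
move: (q - q^-1) => DD.
pose ws := [:: W; V; Aji; Aij; Gi; Gj; B].
rewrite -[W]/(ws`_0) -[V]/(ws`_1) -[Aji]/(ws`_2) -[Aij]/(ws`_3) -[Gi]/(ws`_4).
rewrite -[Gj]/(ws`_5) -[B]/(ws`_6) !(lcW (ws:=ws)) //.
lc_fold.
apply: lc_eq; do 8?(case; [move=> _ /=; case: (ltngtP a bb) => ?; case: (ltngtP bb c) => ?;
  case: (ltngtP a c) => ?; try (exfalso; lia); rewrite /=; ring|]); move=> ? //.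
Qed.

End Main.

End Aux.

Theorem proposition3p6 (R : idomainType) (A : algType R) (n r : nat)
  (q : R) (u : nat -> R) (F : nat -> {poly R}) (t T : nat -> A) :
  (2 <= n)%N -> (1 <= r)%N ->
  q \is a GRing.unit -> Delta r u \is a GRing.unit ->
  (* F_c : degree <= r-1 and F_c(u_{c'}) = delta_{c,c'} Delta *)
  (forall c, (1 <= c <= r)%N -> (size (F c) <= r)%N) ->
  (forall c c', (1 <= c <= r)%N -> (1 <= c' <= r)%N ->
      (F c).[u c'] = (if c == c' then Delta r u else 0)) ->
  (* defining relations of H_{n,r} *)
  (forall i, (1 <= i <= n.-1)%N -> (T i - q%:A) * (T i + q^-1%:A) = 0) ->
  (forall i, (1 <= i <= n)%N -> \prod_(1 <= c < r.+1) (t i - (u c)%:A) = 0) ->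
  (forall i, (1 <= i)%N -> (i.+1 <= n.-1)%N ->
      T i * T i.+1 * T i = T i.+1 * T i * T i.+1) ->
  (forall i j, (1 <= i <= n.-1)%N -> (1 <= j <= n.-1)%N ->
      ((i.+1 < j) || (j.+1 < i))%N -> T i * T j = T j * T i) ->
  (forall i j, (1 <= i <= n)%N -> (1 <= j <= n)%N -> t i * t j = t j * t i) ->
  (forall j k, (1 <= j <= n.-1)%N -> (1 <= k <= n)%N -> k != j -> k != j.+1 ->
      T j * t k = t k * T j) ->
  (forall j, (2 <= j <= n)%N ->
      T j.-1 * t j = t j.-1 * T j.-1 + corr r q u F t j) ->
  (forall j, (2 <= j <= n)%N ->
      T j.-1 * t j.-1 = t j * T j.-1 - corr r q u F t j) ->
  (* conclusion *)
  (forall i j, (1 <= i <= n.-1)%N -> (1 <= j <= n.-1)%N -> ((i.+1 < j) || (j.+1 < i))%N ->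
      gg n r q u t T i * gg n r q u t T j = gg n r q u t T j * gg n r q u t T i) /\
  (forall i, (1 <= i)%N -> (i <= n - 2)%N ->
      gg n r q u t T i * gg n r q u t T i.+1 * gg n r q u t T i
      = gg n r q u t T i.+1 * gg n r q u t T i * gg n r q u t T i.+1).
Proof.
move=> Hn Hr Hq HD HFs HFv HT2 Ht0 Hbr Hfar Htt HTt Hc1 Hc2; split.
  move=> i j /andP [i1 iN] /andP [j1 jN] far.
  have iN' : (i < n)%N by move: iN Hn; lia.
  have jN' : (j < n)%N by move: jN Hn; lia.
  apply: (Aux.part1 Hn Hr Hq HD Ht0 Htt HFv HTt Hc1 Hc2 i1 iN' j1 jN' far).
  by apply: Hfar => //; apply/andP.
move=> i i1 iN.
have iN' : (i.+2 <= n)%N by move: iN Hn; lia.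
apply: (Aux.part2 Hn Hr Hq HD Ht0 Htt HFv HTt Hc1 Hc2 HT2 i1 iN').
apply: Hbr => //; move: iN Hn; lia.
Qed.
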